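(* Let $\varphi(z)=\frac{e^z-1}{z}$ for $z\neq 0$ and $\varphi(0)=1$. Let $\zeta<0$ and $\eta>0$ with $\eta\geq 2/|\zeta|$. Then for all $\lambda\leq 0$, $$\varphi(\eta\lambda)(\lambda+\zeta)\Bigl(1-\frac{\eta\lambda}{2}\varphi(\eta\lambda)\Bigr)\in\Bigl[\tfrac{3}{2}\zeta,\,0\Bigr].$$
   Context: The quantity $\varphi(\eta\lambda)(\lambda+\zeta)(1-\frac{\eta\lambda}{2}\varphi(\eta\lambda))$ is the coefficient of the ''second-order averaged force'' $f_{\eta,2}$ when the splitting $f_F(y)=\lambda y$, $f_S(y)=\zeta y$ is used. *)

(* Defs.v *)
From Stdlib Require Import Reals.
Open Scope R_scope.

Definition phi (z : R) : R :=
  if Req_EM_T z 0 then 1 else (exp z - 1) / z.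

(* Main.v *)
Require Import Defs.
From Stdlib Require Import Reals.
Open Scope R_scope.
From Stdlib Require Import Lra Psatz.
From Coquelicot Require Import Coquelicot.

Lemma pade_aux (x : R) : x <= 0 -> exp x * (2 - x) >= 2 + x.
Proof.
  intros Hx.
  set (h := fun t => exp t * (2 - t) - (2 + t)).
  set (dh := fun t => exp t * (1 - t) - 1).
  assert (Hd : forall t, is_derive h t (dh t)).
  { intros t. unfold h, dh. auto_derive; auto. ring. }
  destruct (MVT_gen h x 0 dh) as [c [Hc Heq]].
  - intros t _. apply Hd.
  - intros t _. unfold h. reg.
  - rewrite Rmin_left in Hc by lra. rewrite Rmax_right in Hc by lra.
    assert (Hdc : dh c <= 0).
    { unfold dh. pose proof (exp_ineq1_le (- c)).
      assert (exp c * exp (- c) = 1) by (rewrite <- exp_plus; replace (c + - c) with 0 by ring; apply exp_0).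
      pose proof (exp_pos c). nra. }
    unfold h in Heq. rewrite exp_0 in Heq. nra.
Qed.

Theorem theorem2p2 (zeta eta : R) :
  zeta < 0 -> 0 < eta -> 2 / Rabs zeta <= eta ->
  forall lambda : R, lambda <= 0 ->
    let v := phi (eta * lambda) * (lambda + zeta)
             * (1 - (eta * lambda / 2) * phi (eta * lambda)) in
    3 / 2 * zeta <= v /\ v <= 0.
Proof.
  intros Hz He Hb lambda Hl v. unfold v, phi; clear v.
  rewrite Rabs_left in Hb by lra.
  assert (Hez : eta * (- zeta) >= 2).
  { apply (Rmult_le_compat_r (- zeta)) in Hb; [|lra].
    unfold Rdiv in Hb. rewrite Rmult_assoc, Rinv_l in Hb by lra. lra. }
  destruct (Req_EM_T (eta * lambda) 0) as [H0|H0].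
  - assert (lambda = 0) by nra. subst. lra.
  - set (x := eta * lambda) in *.
    assert (Hl0 : lambda <> 0) by (intro; subst x; subst; apply H0; ring).
    assert (Hxn : x < 0) by (unfold x; assert (lambda < 0) by lra; nra).
    pose proof (pade_aux x ltac:(lra)) as Hp.
    pose proof (exp_pos x) as Ep.
    assert (E1 : exp x < 1) by (rewrite <- exp_0; apply exp_increasing; lra).
    set (E := exp x) in *.
    set (p := (E - 1) / x).
    assert (Hpx : p * x = E - 1) by (unfold p; field; lra).
    assert (Hp0 : 0 < p) by (destruct (Rlt_le_dec 0 p); nra).
    fold p. 
    assert (Hp2 : p * (2 - x) <= 2) by nra.
    assert (Hw1 : 1 <= 1 - x / 2 * p) by nra.
    assert (Hw2 : 1 - x / 2 * p <= 3/2) by nra.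
    assert (Hlz : lambda + zeta >= zeta * (1 - x / 2)) by (unfold x; nra).
    split.
    + assert (p * (1 - x/2) * (1 - x / 2 * p) <= 3/2) by nra.
      assert (p * (lambda + zeta) >= p * zeta * (1 - x/2)) by nra.
      nra.
    + assert (p * (lambda + zeta) <= 0) by nra. nra.
Qed.
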